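(* Let $\mathcal{M}=(S,E,T)$ be a trivially parametric Markov chain satisfying the standing assumptions below, let $s\in S$ and let $A\subseteq S$ be a never-worse equivalence class. If $s$ almost-surely reaches $A$, then $s\in A$.
   Context: A trivially parametric Markov chain $\mathcal{M}=(S,E,T)$ consists of a finite set of states $S$, targets $T=\{\mathit{fin},\mathit{fail}\}$ with no outgoing edges, and edges $E\subseteq(S\setminus T)\times S$. A graph-preserving valuation assigns to each non-target $s$ a full-support probability distribution on its successor set $sE$; write $P_{\mathsf{val}}(s)$ for the probability of reaching $\mathit{fin}$ from $s$ in the resulting Markov chain. For $s,s'\in S$, $s\sim s'$ (never-worse equivalent) iff $P_{\mathsf{val}}(s)=P_{\mathsf{val}}(s')$ for every graph-preserving valuation; equivalence classes are the classes of $\sim$. $s$ almost-surely reaches $A$ if the probability of reaching $A$ from $s$ is $1$ for every graph-preserving valuation. Standing assumptions: the equivalence classes of $\mathit{fin}$ and $\mathit{fail}$ are $\{\mathit{fin}\}$ and $\{\mathit{fail}\}$; no state has a self-loop; every non-target state has at least two successors. *)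

(* Defs.v *)
From HB Require Import structures.
From mathcomp Require Import all_boot all_order all_algebra.
From mathcomp Require Import all_classical all_reals all_analysis.
Set Implicit Arguments. Unset Strict Implicit. Unset Printing Implicit Defensive.
Import Order.TTheory GRing.Theory Num.Theory numFieldNormedType.Exports.
Local Open Scope ring_scope.

Section PMC.
Variables (R : realType) (S : finType) (E : rel S) (fin fail : S).

Definition target (s : S) : bool := (s == fin) || (s == fail).

Definition graph_preserving (val : S -> S -> R) : Prop :=
  forall s, ~~ target s ->
    [/\ (forall t, E s t -> 0 < val s t),
        (forall t, ~~ E s t -> val s t = 0) &
        \sum_(t : S) val s t = 1].

(* probability of reaching A within n steps in the Markov chain given by val
   (targets are absorbing: they have no outgoing edges) *)
Fixpoint reachn (val : S -> S -> R) (A : pred S) (n : nat) (s : S) : R :=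
  if s \in A then 1 else
  match n with
  | 0 => 0
  | n'.+1 => if target s then 0 else \sum_(t : S) val s t * reachn val A n' t
  end.

(* probability of (eventually) reaching A: limit of the nondecreasing,
   bounded sequence of step-bounded reachability probabilities *)
Definition reach_prob (val : S -> S -> R) (A : pred S) (s : S) : R :=
  limn (fun n => reachn val A n s).

Definition Pval (val : S -> S -> R) (s : S) : R := reach_prob val (pred1 fin) s.

Definition nw_equiv (s s' : S) : Prop :=
  forall val, graph_preserving val -> Pval val s = Pval val s'.

Definition nw_class (A : {set S}) : Prop :=
  exists s0, forall t, t \in A <-> nw_equiv s0 t.

Definition as_reaches (s : S) (A : {set S}) : Prop :=
  forall val, graph_preserving val -> reach_prob val (mem A) s = 1.

Definition standing_assumptions : Prop :=
  [/\ fin != fail,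
      (forall t, ~~ E fin t) /\ (forall t, ~~ E fail t),
      (forall s, nw_equiv s fin -> s = fin) /\ (forall s, nw_equiv s fail -> s = fail),
      (forall s, ~~ E s s) &
      (forall s, ~~ target s -> 1 < #|[set t | E s t]|)%N].

End PMC.

(* Main.v *)
Require Import Defs.
From mathcomp Require Import all_boot all_order all_algebra.
From mathcomp Require Import all_classical all_reals all_analysis.
From mathcomp Require Import lra.
Import Order.TTheory GRing.Theory Num.Theory numFieldNormedType.Exports.
Local Open Scope ring_scope.
Local Open Scope classical_set_scope.

Section Aux.
Variables (R : realType) (S : finType) (E : rel S) (fin fail : S).
Variable (val : S -> S -> R).
Hypothesis Hval : graph_preserving E fin fail val.

Lemma val_ge0 s t : ~~ target fin fail s -> 0 <= val s t.
Proof.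
move=> hs; have [h1 h2 _] := Hval s hs.
by case: (boolP (E s t)) => [/h1/ltW|/h2->].
Qed.

Lemma val_sum s : ~~ target fin fail s -> \sum_t val s t = 1.
Proof. by move=> hs; have [_ _ ->] := Hval s hs. Qed.

Lemma reachn_bnd (A : pred S) n t : 0 <= reachn fin fail val A n t <= 1.
Proof.
elim: n t => [|n IH] t /=; first by case: ifP; rewrite ?lexx ?ler01.
case: ifP => _; first by rewrite lexx ler01.
case: ifP => ht; first by rewrite lexx ler01.
apply/andP; split.
  apply: sumr_ge0 => u _; apply: mulr_ge0; first by apply: val_ge0; rewrite ht.
  by case/andP: (IH u).
rewrite -(@val_sum t); last by rewrite ht.
apply: ler_sum => u _; rewrite ler_piMr //; first by apply: val_ge0; rewrite ht.
by case/andP: (IH u).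
Qed.

Lemma reachn_mono (A : pred S) n t :
  reachn fin fail val A n t <= reachn fin fail val A n.+1 t.
Proof.
elim: n t => [|n IH] t.
  rewrite /=; case: ifP => // _; case: ifP => // ht.
  apply: sumr_ge0 => u _; apply: mulr_ge0; first by apply: val_ge0; rewrite ht.
  by case/andP: (reachn_bnd A 0 u).
rewrite [reachn _ _ _ _ n.+1 t]/= [reachn _ _ _ _ n.+2 t]/=.
case: ifP => // _; case: ifP => // ht.
apply: ler_sum => u _; apply: ler_wpM2l; last exact: IH.
by apply: val_ge0; rewrite ht.
Qed.

Lemma reach_cvg (A : pred S) t :
  (fun n => reachn fin fail val A n t) @ \oo --> reach_prob fin fail val A t.
Proof.
apply: nondecreasing_is_cvgn.
  by apply/nondecreasing_seqP => n; apply: reachn_mono.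
by exists 1 => _ [n _ <-]; case/andP: (reachn_bnd A n t).
Qed.

Lemma cvg_sumR (u : S -> nat -> R) (l : S -> R) :
  (forall i, u i @ \oo --> l i) ->
  (fun n => \sum_i u i n) @ \oo --> \sum_i l i.
Proof.
move=> h; rewrite unlock /=.
elim: (index_enum S) => [|i r IH] /=.
  exact: cvg_cst.
exact: (cvgD (h i) IH).
Qed.

Definition f t := Pval fin fail val t.

Lemma f_bnd t : 0 <= f t <= 1.
Proof.
have c := reach_cvg (pred1 fin) t.
apply/andP; split.
  apply: limr_ge => //; apply: nearW => n; by case/andP: (reachn_bnd (pred1 fin) n t).
apply: limr_le => //; apply: nearW => n; by case/andP: (reachn_bnd (pred1 fin) n t).
Qed.

Lemma f_fin : f fin = 1.
Proof.
rewrite /f /Pval /reach_prob.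
have -> : (fun n => reachn fin fail val (pred1 fin) n fin) = (fun=> 1).
  by apply: funext => -[|n] /=; rewrite inE eqxx.
exact: lim_cst.
Qed.

Lemma f_fail : fin != fail -> f fail = 0.
Proof.
move=> hff; rewrite /f /Pval /reach_prob.
have -> : (fun n => reachn fin fail val (pred1 fin) n fail) = (fun=> 0).
  apply: funext => -[|n] /=; rewrite inE eq_sym (negbTE hff) //.
  by rewrite /target eqxx orbT.
exact: lim_cst.
Qed.

Lemma f_fix t : ~~ target fin fail t -> f t = \sum_u val t u * f u.
Proof.
move=> ht.
have htf : (t \in pred1 fin) = false.
  by rewrite inE; apply/negbTE; apply: contra ht => /eqP ->; rewrite /target eqxx.
rewrite /f /Pval /reach_prob; apply: cvg_lim => //.
rewrite -cvg_shiftS /=.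
have -> : (fun n => reachn fin fail val (pred1 fin) n.+1 t) =
  (fun n => \sum_u val t u * reachn fin fail val (pred1 fin) n u).
  by apply: funext => n /=; rewrite htf (negbTE ht).
apply: cvg_sumR => u.
exact: (cvgM (cvg_cst _) (reach_cvg _ u)).
Qed.

Variables (A : {set S}) (c : R).
Hypothesis hA : forall a, a \in A -> f a = c.
Hypothesis hff : fin != fail.

Fixpoint U (n : nat) (t : S) : R :=
  if t \in A then 0 else if t == fin then 1 else if target fin fail t then 0 else
  match n with
  | 0 => f t
  | n'.+1 => \sum_u val t u * U n' u
  end.

Definition G n t := reachn fin fail val (mem A) n t.

Lemma key n t : f t = U n t + c * G n t /\ 0 <= U n t <= 1 - G n t.
Proof.
elim: n t => [|n IH] t.
  rewrite /G /U /=; case: ifP => [tA|tA].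
    by rewrite hA // mulr1 add0r subrr lexx.
  case: ifP => [/eqP->|tf].
    by rewrite f_fin mulr0 addr0 subr0 lexx ler01.
  case: ifP => [ht|ht].
    have -> : t = fail by move: ht; rewrite /target tf /= => /eqP.
    by rewrite f_fail // mulr0 addr0 subr0 lexx ler01.
  by rewrite mulr0 addr0 subr0 f_bnd.
rewrite /G [U n.+1 t]/= [reachn _ _ _ _ n.+1 t]/=; case: ifP => [tA|tA].
  by rewrite hA // mulr1 add0r subrr lexx.
case: ifP => [/eqP->|tf].
  by rewrite /target eqxx f_fin mulr0 addr0 subr0 lexx ler01.
case: ifP => [ht|ht].
  have -> : t = fail by move: ht; rewrite /target tf /= => /eqP.
  by rewrite f_fail // mulr0 addr0 subr0 lexx ler01.
have nt : ~~ target fin fail t by rewrite ht.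
split.
  rewrite f_fix // mulr_sumr -big_split /=; apply: eq_bigr => u _.
  by have [-> _] := IH u; rewrite mulrDr mulrCA.
apply/andP; split.
  apply: sumr_ge0 => u _; apply: mulr_ge0; first exact: val_ge0.
  by have [_ /andP[]] := IH u.
rewrite -{1}(@val_sum t nt) -sumrB; apply: ler_sum => u _.
rewrite -[X in X - _]mulr1 -mulrBr; apply: ler_wpM2l; first exact: val_ge0.
by have [_ /andP[]] := IH u.
Qed.

End Aux.

Theorem lemma14 (R : realType) (S : finType) (E : rel S) (fin fail : S)
  (HM : standing_assumptions R E fin fail)
  (s : S) (A : {set S}) (HA : nw_class R E fin fail A)
  (Hs : as_reaches R E fin fail s A) :
  s \in A.
Proof.
case: HM => hff _ _ _ _.
case: HA => s0 HA0; apply/HA0 => val Hval.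
set c := Pval fin fail val s0.
have hA : forall a, a \in A -> @f _ _ fin fail val a = c.
  by move=> a /HA0 h; rewrite /f -(h val Hval).
have hG := @reach_cvg _ _ _ _ _ _ Hval (mem A) s.
rewrite (Hs val Hval) in hG.
have hc : 0 <= c <= 1 := @f_bnd _ _ _ _ _ _ Hval s0.
have bnd : forall n, `|@f _ _ fin fail val s - c| <= 1 - @G _ _ fin fail val A n s.
  move=> n; have [e /andP[h1 h2]] := @key _ _ _ _ _ _ Hval A c hA hff n s.
  have gb := @reachn_bnd _ _ _ _ _ _ Hval (mem A) n s.
  rewrite e; rewrite /G in h1 h2 *.
  set g := reachn _ _ _ _ _ _ in h1 h2 gb *.
  set u := U _ _ _ _ _ _ _ _ in h1 h2 *.
  case/andP: hc => hc0 hc1; case/andP: gb => g0 g1.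
  have p1 : 0 <= c * (1 - g) by apply: mulr_ge0; lra.
  have p2 : 0 <= (1 - c) * (1 - g) by apply: mulr_ge0; lra.
  rewrite ler_norml; apply/andP; split; nra.
have L : limn (fun n => reachn fin fail val (mem A) n s) = 1 by apply: cvg_lim.
have : limn (fun n => reachn fin fail val (mem A) n s) <= 1 - `|@f _ _ fin fail val s - c|.
  apply: limr_le; first by apply/cvgP: hG.
  by apply: nearW => n; have := bnd n; rewrite /G => ?; lra.
rewrite L => h.
have : `|@f _ _ fin fail val s - c| <= 0 by lra.
rewrite normr_le0 subr_eq0 => /eqP <-.
by [].
Qed.
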